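(* Let $\{a_n\}_{n\ge 0}$ be a sequence of positive real numbers. Suppose there are real numbers $c>0$ and $0<\alpha\le\beta$ such that $\mathscr{R}^2 a_n = a_na_{n+2}/a_{n+1}^2$ has a Puiseux-type approximation of the form \[ \mathscr{R}^2 a_n = 1+\frac{c}{n^{\alpha}}+\cdots+o\!\left(\frac{1}{n^{\beta}}\right), \] i.e. there exist an integer $m\ge 1$, real exponents $\alpha=\alpha_1<\alpha_2<\cdots<\alpha_m$ and real coefficients $c_1=c,c_2,\dots,c_m$ such that $\lim_{n\to\infty} n^{\beta}\bigl(\mathscr{R}^2a_n-1-\sum_{i=1}^m c_i n^{-\alpha_i}\bigr)=0$. Then $\{a_n\}_{n\ge0}$ is asymptotically $r$-log-convex for \[ r=\begin{cases}\lfloor \beta/\alpha\rfloor, & \text{if } \alpha<2,\\[3pt] \left\lfloor \frac{\beta-\alpha}{2}\right\rfloor+1, & \text{if } \alpha\ge 2.\end{cases} \]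
   Context: $\mathscr{L}a_n=a_na_{n+2}-a_{n+1}^2$ and $\mathscr{L}^k a_n=\mathscr{L}(\mathscr{L}^{k-1}a_n)$. A sequence is $r$-log-convex if $\{\mathscr{L}a_n\},\{\mathscr{L}^2a_n\},\dots,\{\mathscr{L}^r a_n\}$ are all nonnegative sequences; it is asymptotically $r$-log-convex if there is $N$ such that $\mathscr{L}^k a_n\ge 0$ for all $k=1,\dots,r$ and all $n\ge N$. A Puiseux-type approximation of $f_n$ is $g_n=\sum_{i=0}^m c_i n^{-\alpha_i}$ ($\alpha_0<\cdots<\alpha_m$) with $n^{\alpha_m}(f_n-g_n)\to 0$; trailing terms are abbreviated with little-o notation. $\lfloor x\rfloor$ is the floor of $x$. *)

(* Defs.v *)
From Stdlib Require Import Reals.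
From Coquelicot Require Import Coquelicot.
Open Scope R_scope.

Definition Lop (a : nat -> R) : nat -> R :=
  fun n => a n * a (n + 2)%nat - (a (n + 1)%nat) ^ 2.

Fixpoint Liter (k : nat) (a : nat -> R) : nat -> R :=
  match k with
  | O => a
  | S k' => Lop (Liter k' a)
  end.

Definition asymp_r_log_convex (r : nat) (a : nat -> R) : Prop :=
  exists N : nat, forall k n : nat, (1 <= k <= r)%nat -> (N <= n)%nat ->
    0 <= Liter k a n.

Definition R2 (a : nat -> R) (n : nat) : R :=
  a n * a (n + 2)%nat / (a (n + 1)%nat) ^ 2.

(* floor of a real, as an integer: Int_part x = up x - 1 = floor x *)
Definition Rfloor (x : R) : Z := Int_part x.

Definition r_of (alpha beta : R) : nat :=
  if Rlt_dec alpha 2 then Z.to_nat (Rfloor (beta / alpha))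
  else (Z.to_nat (Rfloor ((beta - alpha) / 2)) + 1)%nat.

(* Main.v *)
Require Import Defs.
From Stdlib Require Import Reals Lra Lia List ZArith.
From Coquelicot Require Import Coquelicot.
Open Scope R_scope.

Definition pw (e : R) (n : nat) : R := Rpower (INR n) (- e).

Lemma exp_le_mono : forall x y, x <= y -> exp x <= exp y.
Proof. intros x y [H|H]. left; apply exp_increasing; auto. subst; lra. Qed.

Lemma pw_pos : forall e n, 0 < pw e n.
Proof. intros; unfold pw, Rpower; apply exp_pos. Qed.

Lemma pw_mul : forall e f n, pw e n * pw f n = pw (e + f) n.
Proof. intros; unfold pw. rewrite <- Rpower_plus. f_equal; ring. Qed.

Lemma pw_0 : forall n, pw 0 n = 1.
Proof. intros; unfold pw, Rpower. rewrite Ropp_0, Rmult_0_l. apply exp_0. Qed.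

Lemma ln_INR_ge0 : forall n, (1 <= n)%nat -> 0 <= ln (INR n).
Proof. intros. rewrite <- ln_1. apply ln_le. lra. apply (le_INR 1). auto. Qed.

Lemma pw_anti : forall e f n, (1 <= n)%nat -> e <= f -> pw f n <= pw e n.
Proof.
  intros. unfold pw, Rpower. apply exp_le_mono.
  pose proof (ln_INR_ge0 n H). nra.
Qed.

Lemma pw_le1 : forall e n, (1 <= n)%nat -> 0 <= e -> pw e n <= 1.
Proof. intros. rewrite <- (pw_0 n). apply pw_anti; auto. Qed.

Lemma pw_S : forall e n, 0 <= e -> (1 <= n)%nat -> pw e (S n) <= pw e n.
Proof.
  intros. unfold pw, Rpower. apply exp_le_mono.
  assert (ln (INR n) <= ln (INR (S n))). { apply ln_le. apply (lt_INR 0); lia. apply le_INR; lia. }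
  nra.
Qed.

Lemma pw_lim : forall g eps, 0 < g -> 0 < eps -> exists N, forall n, (N <= n)%nat -> pw g n <= eps.
Proof.
  intros g eps Hg He.
  destruct (INR_archimed 1 (exp (Rmax 0 (- ln eps / g)))) as [N HN]; [lra|].
  exists (S N). intros n Hn. unfold pw, Rpower.
  assert (HnN : INR N <= INR n) by (apply le_INR; lia).
  assert (H0 : 0 < INR n) by (apply (lt_INR 0); lia).
  assert (Hl : Rmax 0 (- ln eps / g) <= ln (INR n)).
  { rewrite <- (ln_exp (Rmax _ _)). apply ln_le. apply exp_pos. lra. }
  rewrite <- (exp_ln eps He). apply exp_le_mono.
  assert (- ln eps / g <= ln (INR n)) by (eapply Rle_trans; [apply Rmax_r|exact Hl]).
  assert (- ln eps <= g * ln (INR n)).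
  { apply (Rmult_le_compat_l g) in H; [|lra]. unfold Rdiv in H.
    replace (g * (- ln eps * / g)) with (- ln eps) in H by (field; lra). lra. }
  lra.
Qed.

Definition bigO (E : R) (u : nat -> R) :=
  exists C N, forall n, (N <= n)%nat -> Rabs (u n) <= C * pw E n.

Lemma bigO_N1 : forall E u, bigO E u -> exists C N, 0 <= C /\ (1 <= N)%nat /\
   forall n, (N <= n)%nat -> Rabs (u n) <= C * pw E n.
Proof.
  intros E u [C [N H]]. exists (Rabs C), (S N). repeat split; auto using Rabs_pos; try lia.
  intros n Hn. eapply Rle_trans. apply H; lia. apply Rmult_le_compat_r.
  left; apply pw_pos. apply Rle_abs.
Qed.

Lemma bigO_ext : forall E u v, bigO E u -> (exists N, forall n, (N <= n)%nat -> u n = v n) -> bigO E v.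
Proof.
  intros E u v [C [N H]] [M HM]. exists C, (max N M). intros n Hn.
  rewrite <- HM by lia. apply H; lia.
Qed.

Lemma bigO_mono : forall E F u, bigO E u -> F <= E -> bigO F u.
Proof.
  intros E F u HB HF. destruct (bigO_N1 _ _ HB) as [C [N [HC [HN H]]]].
  exists C, N. intros n Hn. eapply Rle_trans. apply H; auto.
  apply Rmult_le_compat_l; auto. apply pw_anti; auto; lia.
Qed.

Lemma bigO_add : forall E u v, bigO E u -> bigO E v -> bigO E (fun n => u n + v n).
Proof.
  intros E u v [C [N H]] [C' [N' H']]. exists (C + C'), (max N N'). intros n Hn.
  eapply Rle_trans. apply Rabs_triang. specialize (H n ltac:(lia)). specialize (H' n ltac:(lia)). lra.
Qed.

Lemma bigO_scal : forall E k u, bigO E u -> bigO E (fun n => k * u n).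
Proof.
  intros E k u [C [N H]]. exists (Rabs k * C), N. intros n Hn. rewrite Rabs_mult.
  rewrite Rmult_assoc. apply Rmult_le_compat_l. apply Rabs_pos. auto.
Qed.

Lemma bigO_opp : forall E u, bigO E u -> bigO E (fun n => - u n).
Proof.
  intros E u H. apply bigO_ext with (fun n => -1 * u n). apply bigO_scal; auto.
  exists 0%nat; intros; ring.
Qed.

Lemma bigO_sub : forall E u v, bigO E u -> bigO E v -> bigO E (fun n => u n - v n).
Proof. intros. apply bigO_add; auto. apply bigO_opp; auto. Qed.

Lemma bigO_mul : forall E F u v, bigO E u -> bigO F v -> bigO (E + F) (fun n => u n * v n).
Proof.
  intros E F u v H1 H2. destruct (bigO_N1 _ _ H1) as [C [N [HC [HN H]]]].
  destruct (bigO_N1 _ _ H2) as [C' [N' [HC' [HN' H']]]].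
  exists (C * C'), (max N N'). intros n Hn. rewrite Rabs_mult, <- pw_mul.
  specialize (H n ltac:(lia)). specialize (H' n ltac:(lia)).
  replace (C * C' * (pw E n * pw F n)) with ((C * pw E n) * (C' * pw F n)) by ring.
  apply Rmult_le_compat; auto using Rabs_pos.
Qed.

Lemma bigO_shift : forall E u, 0 <= E -> bigO E u -> bigO E (fun n => u (S n)).
Proof.
  intros E u HE H1. destruct (bigO_N1 _ _ H1) as [C [N [HC [HN H]]]].
  exists C, N. intros n Hn. eapply Rle_trans. apply H; lia.
  apply Rmult_le_compat_l; auto. apply pw_S; auto. lia.
Qed.

Lemma bigO_bounded : forall E u, 0 <= E -> bigO E u -> exists M N, forall n, (N <= n)%nat -> Rabs (u n) <= M.
Proof.
  intros E u HE H1. destruct (bigO_N1 _ _ H1) as [C [N [HC [HN H]]]].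
  exists C, N. intros n Hn. eapply Rle_trans. apply H; auto.
  pose proof (pw_le1 E n ltac:(lia) HE). nra.
Qed.

Lemma bigO_small : forall E u, 0 < E -> bigO E u -> forall eps, 0 < eps -> exists N, forall n, (N <= n)%nat -> Rabs (u n) <= eps.
Proof.
  intros E u HE H1 eps Heps. destruct (bigO_N1 _ _ H1) as [C [N [HC [HN H]]]].
  assert (Hq : 0 < eps / (C + 1)) by (apply Rdiv_lt_0_compat; lra).
  destruct (pw_lim E _ HE Hq) as [N' HN'].
  exists (max N N'). intros n Hn. eapply Rle_trans. apply H; lia.
  specialize (HN' n ltac:(lia)).
  apply Rle_trans with (C * (eps / (C+1))). apply Rmult_le_compat_l; auto.
  unfold Rdiv. rewrite <- Rmult_assoc. apply Rmult_le_reg_r with (C+1). lra.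
  rewrite Rmult_assoc, Rinv_l by lra. nra.
Qed.

Fixpoint gp (l : list (R * R)) (n : nat) : R :=
  match l with nil => 0 | p :: l' => fst p * pw (snd p) n + gp l' n end.

Definition Gs (s : R) (l : list (R * R)) := List.Forall (fun p => s <= snd p) l.

Lemma Gs_mono : forall s t l, Gs s l -> t <= s -> Gs t l.
Proof. intros. unfold Gs in *. eapply Forall_impl; [|eauto]. simpl; intros; lra. Qed.

Lemma Gs_app : forall s l l', Gs s l -> Gs s l' -> Gs s (l ++ l').
Proof. intros. apply Forall_app; auto. Qed.

Lemma gp_app : forall l l' n, gp (l ++ l') n = gp l n + gp l' n.
Proof. induction l; simpl; intros. ring. rewrite IHl. ring. Qed.

Definition gp_scal (k : R) (l : list (R*R)) := map (fun p => (k * fst p, snd p)) l.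
Lemma gp_scal_eq : forall k l n, gp (gp_scal k l) n = k * gp l n.
Proof. induction l; simpl; intros. ring. rewrite IHl. ring. Qed.
Lemma Gs_scal : forall s k l, Gs s l -> Gs s (gp_scal k l).
Proof. intros. unfold Gs, gp_scal in *. apply Forall_map. eapply Forall_impl; [|eauto]. simpl; auto. Qed.

Definition gp_mul1 (p : R*R) (l : list (R*R)) := map (fun q => (fst p * fst q, snd p + snd q)) l.
Fixpoint gp_mul (l l' : list (R*R)) := match l with nil => nil | p :: l0 => gp_mul1 p l' ++ gp_mul l0 l' end.
Lemma gp_mul1_eq : forall p l n, gp (gp_mul1 p l) n = fst p * pw (snd p) n * gp l n.
Proof. induction l; simpl; intros. ring. rewrite IHl, <- pw_mul. ring. Qed.
Lemma gp_mul_eq : forall l l' n, gp (gp_mul l l') n = gp l n * gp l' n.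
Proof. induction l; simpl; intros. ring. rewrite gp_app, gp_mul1_eq, IHl. ring. Qed.
Lemma Gs_mul : forall s t l l', Gs s l -> Gs t l' -> Gs (s + t) (gp_mul l l').
Proof.
  induction l; simpl; intros. constructor. inversion H; subst.
  apply Gs_app; auto. unfold Gs, gp_mul1. apply Forall_map. eapply Forall_impl; [|eauto]. simpl; intros; lra.
Qed.

Lemma bigO_gp : forall s l, Gs s l -> bigO s (gp l).
Proof.
  induction l; simpl; intros. exists 0, 0%nat. intros. rewrite Rabs_R0. lra.
  inversion H; subst. apply bigO_add; auto. apply bigO_scal.
  exists 1, 1%nat. intros. rewrite Rabs_pos_eq by (left; apply pw_pos). rewrite Rmult_1_l. apply pw_anti; auto.
Qed.

Definition AE (s : R) (u : nat -> R) := forall E, exists l, Gs s l /\ bigO E (fun n => u n - gp l n).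

Lemma AE_intro0 : forall s u, (forall E, 0 <= E -> exists l, Gs s l /\ bigO E (fun n => u n - gp l n)) -> AE s u.
Proof.
  intros s u H E. destruct (H (Rmax E 0) (Rmax_r _ _)) as [l [H1 H2]]. exists l; split; auto.
  eapply bigO_mono; eauto. apply Rmax_l.
Qed.

Lemma AE_ext : forall s u v, AE s u -> (exists N, forall n, (N <= n)%nat -> u n = v n) -> AE s v.
Proof.
  intros s u v H [N HN] E. destruct (H E) as [l [H1 H2]]. exists l; split; auto.
  eapply bigO_ext; eauto. exists N; intros. rewrite HN; auto.
Qed.

Lemma AE_bigO : forall s u, AE s u -> bigO s u.
Proof.
  intros s u H. destruct (H s) as [l [H1 H2]].
  apply bigO_ext with (fun n => (u n - gp l n) + gp l n). apply bigO_add; auto. apply bigO_gp; auto.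
  exists 0%nat; intros; ring.
Qed.

Lemma AE_mono : forall s t u, AE s u -> t <= s -> AE t u.
Proof. intros s t u H Ht E. destruct (H E) as [l [H1 H2]]. exists l; split; auto. eapply Gs_mono; eauto. Qed.

Lemma AE_gp : forall s l, Gs s l -> AE s (gp l).
Proof. intros s l H E. exists l; split; auto. exists 0, 0%nat. intros. rewrite Rminus_diag, Rabs_R0. lra. Qed.

Lemma AE_pw : forall e, AE e (pw e).
Proof.
  intros e. apply AE_ext with (gp ((1, e) :: nil)). apply AE_gp. constructor; [simpl; lra|constructor].
  exists 0%nat; intros; simpl; ring.
Qed.

Lemma AE_zero : forall s, AE s (fun _ => 0).
Proof. intros. apply AE_ext with (gp nil). apply AE_gp. constructor. exists 0%nat; intros; reflexivity. Qed.

Lemma AE_const : forall k, AE 0 (fun _ => k).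
Proof.
  intros k. apply AE_ext with (gp ((k, 0) :: nil)). apply AE_gp. constructor; [simpl; lra|constructor].
  exists 0%nat; intros; simpl. rewrite pw_0; ring.
Qed.

Lemma AE_add : forall s u v, AE s u -> AE s v -> AE s (fun n => u n + v n).
Proof.
  intros s u v H1 H2 E. destruct (H1 E) as [l [A1 B1]]. destruct (H2 E) as [l' [A2 B2]].
  exists (l ++ l'). split. apply Gs_app; auto.
  eapply bigO_ext. apply (bigO_add _ _ _ B1 B2). exists 0%nat; intros. rewrite gp_app. ring.
Qed.

Lemma AE_scal : forall s k u, AE s u -> AE s (fun n => k * u n).
Proof.
  intros s k u H1 E. destruct (H1 E) as [l [A1 B1]]. exists (gp_scal k l). split. apply Gs_scal; auto.
  eapply bigO_ext. apply (bigO_scal _ k _ B1). exists 0%nat; intros. rewrite gp_scal_eq. ring.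
Qed.

Lemma AE_opp : forall s u, AE s u -> AE s (fun n => - u n).
Proof. intros. eapply AE_ext. apply (AE_scal _ (-1)); eauto. exists 0%nat; intros; ring. Qed.

Lemma AE_sub : forall s u v, AE s u -> AE s v -> AE s (fun n => u n - v n).
Proof. intros. apply AE_add; auto. apply AE_opp; auto. Qed.

Lemma AE_mul : forall s t u v, AE s u -> AE t v -> AE (s + t) (fun n => u n * v n).
Proof.
  intros s t u v H1 H2 E. destruct (H1 (E - t)) as [l [A1 B1]]. destruct (H2 (E - s)) as [l' [A2 B2]].
  exists (gp_mul l l'). split. apply Gs_mul; auto.
  eapply bigO_ext.
  apply (bigO_add E (fun n => (u n - gp l n) * v n) (fun n => gp l n * (v n - gp l' n))).
  replace E with (E - t + t) by ring. apply bigO_mul; auto. apply AE_bigO; auto.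
  replace E with (s + (E - s)) by ring. apply bigO_mul; auto. apply bigO_gp; auto.
  exists 0%nat; intros. rewrite gp_mul_eq. ring.
Qed.

Lemma dpl_ext : forall f g x l, derivable_pt_lim f x l -> (forall y, f y = g y) -> derivable_pt_lim g x l.
Proof.
  intros f g x l H E eps He. destruct (H eps He) as [d Hd]. exists d. intros h Hh Hh'.
  rewrite <- !E. apply Hd; auto.
Qed.

Fixpoint poly (b : nat -> R) (K : nat) (t : R) : R :=
  match K with O => 0 | S K' => poly b K' t + b K' * t ^ K' end.

Lemma poly_deriv : forall b b' s, (forall i, b (S i) = s * b' i / INR (S i)) ->
  forall K t, derivable_pt_lim (poly b (S K)) t (s * poly b' K t).
Proof.
  intros b b' s Hb. induction K; intros t.
  - simpl. apply dpl_ext with (fct_cte (b O)).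
    replace (s * 0) with 0 by ring. apply derivable_pt_lim_const.
    intros; unfold fct_cte; simpl; ring.
  - apply dpl_ext with (plus_fct (poly b (S K)) (mult_real_fct (b (S K)) (fun y => y ^ (S K)))).
    replace (s * poly b' (S K) t) with (s * poly b' K t + b (S K) * (INR (S K) * t ^ Init.Nat.pred (S K))).
    apply derivable_pt_lim_plus; auto. apply derivable_pt_lim_scal. apply derivable_pt_lim_pow.
    rewrite Hb. simpl poly. simpl Init.Nat.pred. field. apply not_0_INR; lia.
    intros; unfold plus_fct, mult_real_fct; simpl; ring.
Qed.

Lemma poly_at0 : forall b K, poly b (S K) 0 = b O.
Proof. induction K. simpl; ring. simpl poly in *. rewrite IHK. simpl. ring. Qed.

Lemma Rpower_1base : forall s, Rpower 1 s = 1.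
Proof. intros; unfold Rpower. rewrite ln_1, Rmult_0_r. apply exp_0. Qed.

Lemma deriv_rp : forall s t, 0 <= t -> derivable_pt_lim (fun t => Rpower (1 + t) s) t (s * Rpower (1 + t) (s - 1)).
Proof.
  intros s t Ht.
  apply dpl_ext with (comp (fun x => Rpower x s) (plus_fct (fct_cte 1) id)).
  replace (s * Rpower (1 + t) (s - 1)) with ((s * Rpower (plus_fct (fct_cte 1) id t) (s - 1)) * (0 + 1)).
  apply derivable_pt_lim_comp. apply derivable_pt_lim_plus. apply derivable_pt_lim_const. apply derivable_pt_lim_id.
  apply derivable_pt_lim_power. unfold plus_fct, fct_cte, id; lra.
  unfold plus_fct, fct_cte, id; ring.
  intros; unfold comp, plus_fct, fct_cte, id; reflexivity.
Qed.

Lemma taylor : forall K s, exists b : nat -> R, b O = 1 /\ b 1%nat = s /\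
  exists C, forall t, 0 <= t <= 1 -> Rabs (Rpower (1 + t) s - poly b K t) <= C * t ^ K.
Proof.
  induction K; intros s.
  - exists (fun i => match i with O => 1 | S O => s | _ => 0 end). split; auto. split; auto.
    exists (exp (Rabs s * ln 2)). intros t Ht. simpl. rewrite Rminus_0_r, Rmult_1_r.
    unfold Rpower. rewrite Rabs_pos_eq by (left; apply exp_pos). apply exp_le_mono.
    assert (0 <= ln (1 + t)) by (rewrite <- ln_1; apply ln_le; lra).
    assert (ln (1 + t) <= ln 2) by (apply ln_le; lra).
    apply Rle_trans with (Rabs s * ln (1 + t)).
    apply Rle_trans with (Rabs (s * ln (1 + t))). apply Rle_abs. rewrite Rabs_mult, (Rabs_pos_eq (ln _)); lra.
    apply Rmult_le_compat_l; auto. apply Rabs_pos.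
  - destruct (IHK (s - 1)) as [b' [Hb0 [Hb1 [C' HC']]]].
    set (b := fun i => match i with O => 1 | S j => s * b' j / INR (S j) end).
    exists b. split. reflexivity. split. unfold b. rewrite Hb0. simpl; field.
    exists (Rabs s * C'). intros t Ht.
    assert (Hb : forall i, b (S i) = s * b' i / INR (S i)) by reflexivity.
    destruct (Req_dec t 0) as [Ht0|Ht0].
    + subst t. rewrite poly_at0. rewrite Rplus_0_r, Rpower_1base. unfold b. simpl.
      rewrite Rminus_diag, Rabs_R0. lra.
    + destruct (MVT_cor2 (fun t => Rpower (1 + t) s - poly b (S K) t)
         (fun t => s * Rpower (1 + t) (s - 1) - s * poly b' K t) 0 t) as [c [Hc1 Hc2]].
      lra.
      intros c Hc. apply dpl_ext with (minus_fct (fun t => Rpower (1 + t) s) (poly b (S K))).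
      apply derivable_pt_lim_minus. apply deriv_rp; lra. apply poly_deriv; auto.
      intros; unfold minus_fct; reflexivity.
      rewrite poly_at0, Rplus_0_r, Rpower_1base in Hc1. unfold b at 2 in Hc1.
      replace (Rpower (1 + t) s - poly b (S K) t) with ((s * Rpower (1 + c) (s - 1) - s * poly b' K c) * (t - 0)) by lra.
      rewrite Rabs_mult. rewrite Rminus_0_r, (Rabs_pos_eq t) by lra.
      replace (s * Rpower (1 + c) (s - 1) - s * poly b' K c) with (s * (Rpower (1 + c) (s - 1) - poly b' K c)) by ring.
      rewrite Rabs_mult. specialize (HC' c ltac:(lra)).
      assert (c ^ K <= t ^ K) by (apply pow_incr; lra).
      assert (0 <= C') . { assert (0 <= C' * c ^ K) by (eapply Rle_trans; [apply Rabs_pos|exact HC']).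
        assert (0 < c ^ K) by (apply pow_lt; lra). nra. }
      simpl pow. pose proof (Rabs_pos s). pose proof (Rabs_pos (Rpower (1 + c) (s - 1) - poly b' K c)).
      apply Rle_trans with (Rabs s * (C' * t ^ K) * t).
      apply Rmult_le_compat_r. lra. apply Rmult_le_compat_l. lra. eapply Rle_trans; [exact HC'|apply Rmult_le_compat_l; lra].
      right; ring.
Qed.

Fixpoint poly2 (b : nat -> R) (K : nat) (t : R) : R :=
  match K with O => 0 | S K' => poly2 b K' t + b (S (S K')) * t ^ (S (S K')) end.

Lemma poly_split : forall b K t, poly b (S (S K)) t = b O + b 1%nat * t + poly2 b K t.
Proof.
  induction K; intros. simpl; ring.
  change (poly b (S (S (S K))) t) with (poly b (S (S K)) t + b (S (S K)) * t ^ (S (S K))).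
  rewrite IHK. change (poly2 b (S K) t) with (poly2 b K t + b (S (S K)) * t ^ (S (S K))). ring.
Qed.

Fixpoint glist (b : nat -> R) (e : R) (K : nat) : list (R * R) :=
  match K with O => nil | S K' => (b (S (S K')), e + INR (S (S K'))) :: glist b e K' end.

Lemma pw_nat : forall e j n, (1 <= n)%nat -> pw (e + INR j) n = pw e n * (/ INR n) ^ j.
Proof.
  intros. rewrite <- pw_mul. f_equal. unfold pw. rewrite Rpower_Ropp, Rpower_pow, pow_inv; auto.
  apply (lt_INR 0); lia.
Qed.

Lemma gp_glist : forall b e K n, (1 <= n)%nat -> gp (glist b e K) n = pw e n * poly2 b K (/ INR n).
Proof. induction K; intros; cbn [glist gp fst snd poly2]. ring. rewrite IHK, pw_nat by auto. ring. Qed.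

Lemma Gs_glist : forall b e K, Gs (e + 2) (glist b e K).
Proof.
  induction K; cbn [glist]; constructor; auto. cbn [snd].
  assert (2 <= INR (S (S K))) by (apply (le_INR 2); lia). lra.
Qed.

Lemma pw_Sn : forall e n, (1 <= n)%nat -> pw e (S n) = pw e n * Rpower (1 + / INR n) (- e).
Proof.
  intros. assert (0 < INR n) by (apply (lt_INR 0); lia). unfold pw.
  rewrite Rpower_mult_distr; auto. f_equal. rewrite S_INR. field. lra.
  assert (0 < / INR n) by (apply Rinv_0_lt_compat; auto). lra.
Qed.

Lemma AE_shift_pw : forall e, AE (e + 2) (fun n => pw e (S n) - pw e n + e * pw (e + 1) n).
Proof.
  intros e. apply AE_intro0. intros E HE.
  destruct (INR_archimed 1 (E - e)) as [K HK]; [lra|]. rewrite Rmult_1_r in HK.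
  destruct (taylor (S (S K)) (- e)) as [b [Hb0 [Hb1 [C HC]]]].
  exists (glist b e K). split. apply Gs_glist.
  exists C, 1%nat. intros n Hn.
  assert (Hn0 : 0 < INR n) by (apply (lt_INR 0); lia).
  assert (Ht : 0 <= / INR n <= 1).
  { split. left; apply Rinv_0_lt_compat; auto. rewrite <- Rinv_1. apply Rinv_le_contravar. lra. apply (le_INR 1); auto. }
  rewrite gp_glist, pw_Sn by auto.
  replace (pw (e + 1) n) with (pw e n * (/ INR n) ^ 1) by (rewrite <- pw_nat; auto; f_equal).
  replace (pw e n * Rpower (1 + / INR n) (- e) - pw e n + e * (pw e n * (/ INR n) ^ 1) -
     pw e n * poly2 b K (/ INR n)) with
     (pw e n * (Rpower (1 + / INR n) (- e) - poly b (S (S K)) (/ INR n))).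
  2:{ rewrite poly_split, Hb0, Hb1. ring. }
  rewrite Rabs_mult, Rabs_pos_eq by (left; apply pw_pos).
  specialize (HC _ Ht).
  apply Rle_trans with (pw e n * (C * (/ INR n) ^ S (S K))).
  apply Rmult_le_compat_l; auto. left; apply pw_pos.
  replace (pw e n * (C * (/ INR n) ^ S (S K))) with (C * pw (e + INR (S (S K))) n) by (rewrite pw_nat; auto; ring).
  assert (0 <= C). { assert (0 <= C * (/ INR n) ^ S (S K)) by (eapply Rle_trans; [apply Rabs_pos|exact HC]).
    assert (0 < (/ INR n) ^ S (S K)) by (apply pow_lt; apply Rinv_0_lt_compat; auto). nra. }
  apply Rmult_le_compat_l; auto. apply pw_anti; auto.
  rewrite !S_INR. lra.
Qed.

Lemma AE_diff_pw : forall e, AE (e + 1) (fun n => pw e (S n) - pw e n).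
Proof.
  intros e. eapply AE_ext.
  apply (AE_sub (e + 1) (fun n => pw e (S n) - pw e n + e * pw (e + 1) n) (fun n => e * pw (e + 1) n)).
  eapply AE_mono. apply AE_shift_pw. lra. apply AE_scal. apply AE_pw.
  exists 0%nat. intros; ring.
Qed.

Lemma AE_diff_gp : forall s l, Gs s l -> AE (s + 1) (fun n => gp l (S n) - gp l n).
Proof.
  induction l; intros H; simpl.
  - eapply AE_ext. apply AE_zero. exists 0%nat; intros; ring.
  - inversion H; subst. eapply AE_ext.
    apply (AE_add _ (fun n => fst a * (pw (snd a) (S n) - pw (snd a) n)) (fun n => gp l (S n) - gp l n)).
    apply AE_scal. eapply AE_mono. apply AE_diff_pw. lra. auto.
    exists 0%nat; intros; ring.
Qed.

Lemma AE_diff : forall s u, AE s u -> AE (s + 1) (fun n => u (S n) - u n).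
Proof.
  intros s u H. apply AE_intro0. intros E HE.
  destruct (H E) as [l [H1 H2]].
  destruct (AE_diff_gp s l H1 E) as [l' [H3 H4]].
  exists l'. split; auto.
  eapply bigO_ext. apply (bigO_add E _ _ H4 (bigO_sub E _ _ (bigO_shift E _ HE H2) H2)).
  exists 0%nat; intros; simpl; ring.
Qed.

Lemma AE_shift : forall s u, AE s u -> AE s (fun n => u (S n)).
Proof.
  intros s u H. eapply AE_ext. apply (AE_add s u (fun n => u (S n) - u n)); auto.
  eapply AE_mono. apply AE_diff; eauto. lra. exists 0%nat; intros; ring.
Qed.

Definition LT (c s : R) (u : nat -> R) := exists g, 0 < g /\ AE (s + g) (fun n => u n - c * pw s n).

Lemma AE_exp : forall s t u, AE s u -> s = t -> AE t u.
Proof. intros; subst; auto. Qed.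

Lemma LT_ext : forall c s u v, LT c s u -> (exists N, forall n, (N <= n)%nat -> u n = v n) -> LT c s v.
Proof.
  intros c s u v [g [Hg H]] [N HN]. exists g; split; auto. eapply AE_ext; eauto.
  exists N; intros; rewrite HN; auto.
Qed.

Lemma LT_eq : forall c s u c' s', LT c s u -> c = c' -> s = s' -> LT c' s' u.
Proof. intros; subst; auto. Qed.

Lemma LT_AE : forall c s u, LT c s u -> AE s u.
Proof.
  intros c s u [g [Hg H]]. eapply AE_ext. apply (AE_add s (fun n => u n - c * pw s n) (fun n => c * pw s n)).
  eapply AE_mono; eauto; lra. apply AE_scal, AE_pw. exists 0%nat; intros; ring.
Qed.

Lemma LT_pw : forall s, LT 1 s (pw s).
Proof.
  intros s. exists 1; split. lra. eapply AE_ext. apply AE_zero. exists 0%nat; intros; ring.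
Qed.

Lemma LT_scal : forall c s k u, LT c s u -> LT (k * c) s (fun n => k * u n).
Proof.
  intros c s k u [g [Hg H]]. exists g; split; auto. eapply AE_ext. apply (AE_scal _ k); eauto.
  exists 0%nat; intros; ring.
Qed.

Lemma LT_add : forall c d s u v, LT c s u -> LT d s v -> LT (c + d) s (fun n => u n + v n).
Proof.
  intros c d s u v [g [Hg H]] [g' [Hg' H']]. exists (Rmin g g'); split. apply Rmin_glb_lt; auto.
  eapply AE_ext. apply AE_add; [apply (AE_mono _ _ _ H)|apply (AE_mono _ _ _ H')]. apply Rplus_le_compat_l, Rmin_l.
  apply Rplus_le_compat_l, Rmin_r.
  exists 0%nat; intros; simpl; ring.
Qed.

Lemma LT_add_dom : forall c s t u v, LT c s u -> AE t v -> s < t -> LT c s (fun n => u n + v n).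
Proof.
  intros c s t u v [g [Hg H]] H' Hst. exists (Rmin g (t - s)); split. apply Rmin_glb_lt; lra.
  eapply AE_ext. apply AE_add; [apply (AE_mono _ _ _ H)|apply (AE_mono _ _ _ H')]. apply Rplus_le_compat_l, Rmin_l.
  pose proof (Rmin_r g (t - s)). lra.
  exists 0%nat; intros; simpl; ring.
Qed.

Lemma LT_mul : forall c d s t u v, LT c s u -> LT d t v -> LT (c * d) (s + t) (fun n => u n * v n).
Proof.
  intros c d s t u v Hu Hv. pose proof (LT_AE _ _ _ Hv) as Av.
  destruct Hu as [g [Hg H]]. destruct Hv as [g' [Hg' H']].
  exists (Rmin g g'); split. apply Rmin_glb_lt; auto.
  eapply AE_ext. apply AE_add.
  eapply AE_mono. apply (AE_mul _ _ _ _ H Av). pose proof (Rmin_l g g'). lra.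
  eapply AE_mono. apply AE_scal. apply (AE_mul _ _ _ _ (AE_pw s) H'). pose proof (Rmin_r g g'). lra.
  exists 0%nat; intros; simpl. rewrite <- pw_mul. instantiate (1 := c). ring.
Qed.

Lemma LT_diff : forall c s u, LT c s u -> LT (- (c * s)) (s + 1) (fun n => u (S n) - u n).
Proof.
  intros c s u [g [Hg H]]. exists (Rmin g 1); split. apply Rmin_glb_lt; lra.
  eapply AE_ext. apply AE_add.
  eapply AE_mono. apply (AE_diff _ _ H). pose proof (Rmin_l g 1). lra.
  eapply AE_mono. apply AE_scal. apply (AE_shift_pw s). pose proof (Rmin_r g 1). lra.
  exists 0%nat; intros; simpl. instantiate (1 := c). ring.
Qed.

Lemma LT_shift : forall c s u, LT c s u -> LT c s (fun n => u (S n)).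
Proof.
  intros c s u H. eapply LT_ext. apply (LT_add_dom c s (s + 1) u (fun n => u (S n) - u n)); auto.
  apply AE_diff. eapply LT_AE; eauto. lra. exists 0%nat; intros; ring.
Qed.

Lemma LT_pos : forall c s u, LT c s u -> 0 < c -> exists N, forall n, (N <= n)%nat -> c / 2 * pw s n <= u n.
Proof.
  intros c s u [g [Hg H]] Hc. destruct (bigO_N1 _ _ (AE_bigO _ _ H)) as [C [N [HC [HN HB]]]].
  assert (Hq : 0 < c / (2 * (C + 1))) by (apply Rdiv_lt_0_compat; lra).
  destruct (pw_lim g _ Hg Hq) as [N' HN'].
  exists (max N N'). intros n Hn. specialize (HB n ltac:(lia)). specialize (HN' n ltac:(lia)).
  rewrite <- pw_mul in HB. pose proof (pw_pos s n). pose proof (pw_pos g n).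
  assert (C * pw g n <= c / 2).
  { apply Rle_trans with (C * (c / (2 * (C + 1)))). apply Rmult_le_compat_l; auto.
    unfold Rdiv. rewrite Rinv_mult. 
    apply Rle_trans with ((C + 1) * (c * (/ 2 * / (C + 1)))). apply Rmult_le_compat_r. 
    assert (0 < / (C+1)) by (apply Rinv_0_lt_compat; lra). nra. lra.
    right. field. lra. }
  apply Rabs_le_between in HB. 
  assert (C * (pw s n * pw g n) <= c / 2 * pw s n) by nra. lra.
Qed.

Lemma LT_small : forall c s u, LT c s u -> 0 < s -> forall eps, 0 < eps -> exists N, forall n, (N <= n)%nat -> Rabs (u n) <= eps.
Proof. intros c s u H Hs. apply (bigO_small s u Hs (AE_bigO _ _ (LT_AE _ _ _ H))). Qed.

Lemma LT_inv : forall c s u, LT c s u -> c <> 0 -> LT (/ c) (- s) (fun n => / u n).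
Proof.
  intros c s u [g [Hg H]] Hc.
  set (r := fun n => / c * (pw (- s) n * (u n - c * pw s n))).
  assert (Ar : AE g r).
  { unfold r. apply AE_scal. eapply AE_mono. apply (AE_mul _ _ _ _ (AE_pw (- s)) H). lra. }
  assert (Eu : forall n, u n = c * pw s n * (1 + r n)).
  { intros n. unfold r. 
    replace (c * pw s n * (1 + / c * (pw (- s) n * (u n - c * pw s n)))) with
      (c * pw s n + (pw s n * pw (- s) n) * (u n - c * pw s n)) by (field; auto).
    rewrite pw_mul. replace (s + - s) with 0 by ring. rewrite pw_0. ring. }
  destruct (bigO_small _ _ Hg (AE_bigO _ _ Ar) (1/2)) as [N0 HN0]; [lra|].
  set (h := fun n => / (1 + r n) - 1).
  assert (Eh : forall n, (N0 <= n)%nat -> h n = - r n - r n * h n).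
  { intros n Hn. specialize (HN0 n Hn). apply Rabs_le_between in HN0. unfold h. field. lra. }
  assert (Boot : forall K, exists l, Gs g l /\ bigO (INR (S K) * g) (fun n => h n - gp l n)).
  { induction K.
    - exists nil. split. constructor. simpl. rewrite Rmult_1_l.
      apply bigO_ext with (fun n => (- r n) * (/ (1 + r n))).
      replace g with (g + 0) at 1 by ring. apply bigO_mul. apply bigO_opp. apply AE_bigO; auto.
      exists 2, N0. intros n Hn. specialize (HN0 n Hn). apply Rabs_le_between in HN0. rewrite pw_0, Rmult_1_r.
      rewrite Rabs_pos_eq. rewrite <- (Rinv_inv 2). apply Rinv_le_contravar. lra. lra.
      left. apply Rinv_0_lt_compat. lra.
      exists N0. intros n Hn. specialize (HN0 n Hn). apply Rabs_le_between in HN0. unfold h. field. lra.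
    - destruct IHK as [l [Hl Hb]].
      assert (A1 : AE g (fun n => - r n - r n * gp l n)).
      { apply AE_sub. apply AE_opp; auto. eapply AE_mono. apply AE_mul; eauto. apply AE_gp; eauto. lra. }
      destruct (A1 (INR (S (S K)) * g)) as [l' [Hl' Hb']].
      exists l'. split; auto.
      apply bigO_ext with (fun n => ((- r n - r n * gp l n) - gp l' n) + (- r n * (h n - gp l n))).
      apply bigO_add; auto. replace (INR (S (S K)) * g) with (g + INR (S K) * g) by (rewrite (S_INR (S K)); ring).
      apply bigO_mul; auto. apply bigO_opp. apply AE_bigO; auto.
      exists N0. intros n Hn. rewrite (Eh n Hn) at 2. ring. }
  assert (Ah : AE g h).
  { apply AE_intro0. intros E HE. destruct (INR_archimed g E Hg) as [K HK].
    destruct (Boot K) as [l [Hl Hb]]. exists l; split; auto. eapply bigO_mono; eauto.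
    rewrite S_INR. lra. }
  exists g. split; auto.
  eapply AE_ext. apply AE_scal. apply (AE_mul _ _ _ _ (AE_pw (- s)) Ah).
  exists N0. intros n Hn. specialize (HN0 n Hn). apply Rabs_le_between in HN0. unfold h.
  rewrite (Eu n). rewrite !Rinv_mult.
  assert (pw s n * pw (- s) n = 1) by (rewrite pw_mul; replace (s + - s) with 0 by ring; apply pw_0).
  assert (/ pw s n = pw (- s) n). { pose proof (pw_pos s n). field_simplify_eq. 2: lra. lra. }
  rewrite H1. instantiate (1 := / c). field. lra.
Qed.

Definition smallo (E : R) (u : nat -> R) :=
  forall eps, 0 < eps -> exists N, forall n, (N <= n)%nat -> Rabs (u n) <= eps * pw E n.

Definition bounded (u : nat -> R) := exists M N, forall n, (N <= n)%nat -> Rabs (u n) <= M.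

Definition ev (P : nat -> Prop) := exists N, forall n, (N <= n)%nat -> P n.

Lemma sm_ext : forall E u v, smallo E u -> ev (fun n => u n = v n) -> smallo E v.
Proof.
  intros E u v H [N HN] eps He. destruct (H eps He) as [M HM]. exists (max N M). intros n Hn.
  rewrite <- HN by lia. apply HM; lia.
Qed.

Lemma sm_mono : forall E F u, smallo E u -> F <= E -> smallo F u.
Proof.
  intros E F u H HF eps He. destruct (H eps He) as [M HM]. exists (max 1 M). intros n Hn.
  eapply Rle_trans. apply HM; lia. apply Rmult_le_compat_l. lra. apply pw_anti; auto; lia.
Qed.

Lemma sm_shift : forall E u, 0 <= E -> smallo E u -> smallo E (fun n => u (S n)).
Proof.
  intros E u HE H eps He. destruct (H eps He) as [M HM]. exists (max 1 M). intros n Hn.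
  eapply Rle_trans. apply HM; lia. apply Rmult_le_compat_l. lra. apply pw_S; auto; lia.
Qed.

Lemma sm_small : forall E u, 0 <= E -> smallo E u -> forall eps, 0 < eps -> ev (fun n => Rabs (u n) <= eps).
Proof.
  intros E u HE H eps He. destruct (H eps He) as [M HM]. exists (max 1 M). intros n Hn.
  eapply Rle_trans. apply HM; lia. pose proof (pw_le1 E n ltac:(lia) HE). nra.
Qed.

Lemma sm_bmul : forall E u v, smallo E u -> bounded v -> smallo E (fun n => u n * v n).
Proof.
  intros E u v H [M [N HM]] eps He.
  assert (HM1 : 0 < Rabs M + 1) by (pose proof (Rabs_pos M); lra).
  destruct (H (eps / (Rabs M + 1))) as [K HK]. apply Rdiv_lt_0_compat; lra.
  exists (max N K). intros n Hn. specialize (HK n ltac:(lia)). specialize (HM n ltac:(lia)).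
  rewrite Rabs_mult. pose proof (pw_pos E n). pose proof (Rabs_pos (u n)). pose proof (Rabs_pos (v n)).
  pose proof (Rle_abs M).
  apply Rle_trans with (eps / (Rabs M + 1) * pw E n * (Rabs M + 1)).
  apply Rmult_le_compat; auto. lra.
  right. field. lra.
Qed.

Lemma sm_add : forall E u v, smallo E u -> smallo E v -> smallo E (fun n => u n + v n).
Proof.
  intros E u v H1 H2 eps He. destruct (H1 (eps/2)) as [N1 HN1]. lra. destruct (H2 (eps/2)) as [N2 HN2]. lra.
  exists (max N1 N2). intros n Hn. specialize (HN1 n ltac:(lia)). specialize (HN2 n ltac:(lia)).
  eapply Rle_trans. apply Rabs_triang. lra.
Qed.

Lemma sm_div : forall E s k u v, smallo E u -> 0 < k -> ev (fun n => k * pw s n <= Rabs (v n)) ->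
  smallo (E - s) (fun n => u n / v n).
Proof.
  intros E s k u v H Hk [N HN] eps He. destruct (H (eps * k)) as [M HM]. nra.
  exists (max N M). intros n Hn. specialize (HN n ltac:(lia)). specialize (HM n ltac:(lia)).
  pose proof (pw_pos s n). pose proof (pw_pos E n).
  assert (0 < Rabs (v n)) by nra.
  unfold Rdiv. rewrite Rabs_mult, Rabs_inv.
  replace (pw (E - s) n) with (pw E n * / pw s n).
  2:{ replace (E - s) with (E + - s) by ring. rewrite <- pw_mul. f_equal.
      assert (pw s n * pw (- s) n = 1) by (rewrite pw_mul; replace (s + - s) with 0 by ring; apply pw_0).
      field_simplify_eq; lra. }
  apply Rmult_le_reg_r with (Rabs (v n)); auto.
  rewrite Rmult_assoc, Rinv_l, Rmult_1_r by lra.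
  eapply Rle_trans. apply HM.
  apply Rle_trans with (eps * (pw E n * / pw s n) * (k * pw s n)).
  right. field. lra.
  assert (0 < / pw s n) by (apply Rinv_0_lt_compat; auto).
  apply Rmult_le_compat_l; auto.
  apply Rmult_le_pos; [lra| apply Rmult_le_pos; lra].
Qed.

Definition approx (E : R) (u v : nat -> R) :=
  exists w, smallo E w /\ ev (fun n => u n = v n * (1 + w n)).

Lemma approx_ext : forall E u u' v v', approx E u v -> ev (fun n => u n = u' n) -> ev (fun n => v n = v' n) -> approx E u' v'.
Proof.
  intros E u u' v v' [w [Hw [N HN]]] [N1 H1] [N2 H2]. exists w; split; auto.
  exists (max N (max N1 N2)). intros n Hn. rewrite <- H1, <- H2 by lia. apply HN; lia.
Qed.

Lemma approx_mono : forall E F u v, approx E u v -> F <= E -> approx F u v.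
Proof. intros E F u v [w [Hw H]] HF. exists w; split; auto. eapply sm_mono; eauto. Qed.

Lemma sm_bounded : forall E u, 0 <= E -> smallo E u -> bounded u.
Proof.
  intros. destruct (sm_small E u H H0 1) as [N HN]. lra. exists 1, N. auto.
Qed.

Lemma approx_mul : forall E u v u' v', 0 <= E -> approx E u v -> approx E u' v' ->
   approx E (fun n => u n * u' n) (fun n => v n * v' n).
Proof.
  intros E u v u' v' HE [w [Hw [N HN]]] [w' [Hw' [N' HN']]].
  exists (fun n => w n + w' n + w n * w' n). split.
  apply sm_add. apply sm_add; auto. apply sm_bmul; auto. eapply sm_bounded; eauto.
  exists (max N N'). intros n Hn. rewrite HN, HN' by lia. ring.
Qed.

Lemma approx_inv : forall E u v, 0 <= E -> approx E u v -> approx E (fun n => / u n) (fun n => / v n).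
Proof.
  intros E u v HE [w [Hw [N HN]]].
  destruct (sm_small E w HE Hw (1/2)) as [N1 HN1]. lra.
  exists (fun n => - w n / (1 + w n)). split.
  - replace E with (E - 0) by ring. apply sm_div with (1/2).
    eapply sm_ext. apply (sm_bmul E w (fun _ => -1)); auto. exists 1, 0%nat. intros. unfold Rabs; destruct Rcase_abs; lra.
    exists 0%nat; intros; ring. lra.
    exists N1. intros n Hn. specialize (HN1 n Hn). rewrite pw_0. apply Rabs_le_between in HN1.
    rewrite Rabs_pos_eq; lra.
  - exists (max N N1). intros n Hn. rewrite HN by lia. specialize (HN1 n ltac:(lia)).
    apply Rabs_le_between in HN1. rewrite Rinv_mult. apply Rmult_eq_compat_l. field. lra.
Qed.

Lemma approx_shift : forall E u v, 0 <= E -> approx E u v -> approx E (fun n => u (S n)) (fun n => v (S n)).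
Proof.
  intros E u v HE [w [Hw [N HN]]]. exists (fun n => w (S n)). split. apply sm_shift; auto.
  exists N. intros n Hn. apply HN. lia.
Qed.

Lemma approx_add : forall E s k u v, smallo E (fun n => u n - v n) -> 0 < k ->
  ev (fun n => k * pw s n <= Rabs (v n)) -> approx (E - s) u v.
Proof.
  intros E s k u v H Hk Hv. exists (fun n => (u n - v n) / v n). split.
  apply sm_div with k; auto.
  destruct Hv as [N HN]. exists N. intros n Hn. specialize (HN n Hn). pose proof (pw_pos s n).
  assert (Hv0 : 0 < Rabs (v n)) by nra. assert (v n <> 0). { intro E0. rewrite E0, Rabs_R0 in Hv0. lra. }
  field; auto.
Qed.

Lemma approx_final : forall E u v, approx E u v -> bounded v -> smallo E (fun n => u n - v n).
Proof.
  intros E u v [w [Hw [N HN]]] Hb. eapply sm_ext. apply (sm_bmul E w v); auto.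
  exists N. intros n Hn. rewrite HN by auto. ring.
Qed.

Definition falpha (a : R) : R := if Rlt_dec a 2 then a else 2.

Lemma LT_next : forall c a l, LT c a l -> 0 < c -> 0 < a ->
  exists c', 0 < c' /\ LT c' (falpha a)
    (fun n => (1 + l (S n)) * (1 + l (S n)) * (l n * l (S (S n)) * / (l (S n) * l (S n))) - 1).
Proof.
  intros c a l H Hc Ha.
  set (D1 := fun n => l (S n) - l n).
  set (D2 := fun n => D1 (S n) - D1 n).
  assert (H1 : LT (- (c * a)) (a + 1) D1) by (apply LT_diff; auto).
  assert (H2 : LT (- (- (c * a) * (a + 1))) (a + 1 + 1) D2) by (apply LT_diff; auto).
  assert (Hx : LT (c * (c * a * (a + 1))) (2 * a + 2) (fun n => l n * D2 n)).
  { eapply LT_eq. apply (LT_mul _ _ _ _ _ _ H H2). ring. ring. }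
  assert (Hy : LT (-1 * (c * a * (c * a))) (2 * a + 2) (fun n => -1 * (D1 n * D1 n))).
  { eapply LT_eq. apply LT_scal. apply (LT_mul _ _ _ _ _ _ H1 H1). ring. ring. }
  assert (HN : LT (c * c * a) (2 * a + 2) (fun n => l n * D2 n - D1 n * D1 n)).
  { eapply LT_eq. eapply LT_ext. apply (LT_add _ _ _ _ _ Hx Hy). exists 0%nat; intros; ring. ring. ring. }
  assert (HL1 : LT c a (fun n => l (S n))) by (apply LT_shift; auto).
  assert (HL2 : LT (c * c) (a + a) (fun n => l (S n) * l (S n))) by (apply LT_mul; auto).
  assert (Hc2 : c * c <> 0) by nra.
  assert (Hinv : LT (/ (c * c)) (- (a + a)) (fun n => / (l (S n) * l (S n)))) by (apply (LT_inv _ _ _ HL2 Hc2)).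
  assert (HQ : LT a 2 (fun n => (l n * D2 n - D1 n * D1 n) * / (l (S n) * l (S n)))).
  { eapply LT_eq. apply (LT_mul _ _ _ _ _ _ HN Hinv). field. lra. ring. }
  pose (Q := fun n => (l n * D2 n - D1 n * D1 n) * / (l (S n) * l (S n))).
  pose (A := fun n => 2 * l (S n) + l (S n) * l (S n)).
  assert (HA : LT (2 * c) a A).
  { apply (LT_add_dom _ _ (a + a)). apply LT_scal; auto. eapply LT_AE; eauto. lra. }
  assert (AQ : AE (a + 2) (fun n => A n * Q n)).
  { apply AE_mul. eapply LT_AE; eauto. eapply LT_AE; eauto. }
  destruct (LT_pos _ _ _ H Hc) as [N0 HN0].
  assert (Eid : forall n, (N0 <= n)%nat -> A n + Q n + A n * Q n =
      (1 + l (S n)) * (1 + l (S n)) * (l n * l (S (S n)) * / (l (S n) * l (S n))) - 1).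
  { intros n Hn. specialize (HN0 (S n) ltac:(lia)). pose proof (pw_pos a (S n)).
    assert (0 < l (S n)) by nra. unfold A, Q, D2, D1. field. lra. }
  unfold falpha. destruct (Rlt_dec a 2) as [Hlt|Hge].
  - exists (2 * c). split. lra.
    apply (LT_ext _ _ (fun n => A n + (Q n + A n * Q n))).
    apply (LT_add_dom _ _ 2 A (fun n => Q n + A n * Q n) HA). apply AE_add. eapply LT_AE; eauto.
    eapply AE_mono. exact AQ. lra. lra. exists N0; intros; rewrite <- Eid; auto; ring.
  - destruct (Req_dec a 2) as [Heq|Hne].
    + exists (2 * c + a). split. lra.
      apply (LT_ext _ _ (fun n => (A n + Q n) + A n * Q n)).
      apply (LT_add_dom _ _ (a + 2) (fun n => A n + Q n) (fun n => A n * Q n)); auto. apply LT_add; auto.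
      eapply LT_eq. exact HA. reflexivity. auto. lra.
      exists N0; intros; rewrite <- Eid; auto.
    + exists a. split. lra.
      apply (LT_ext _ _ (fun n => Q n + (A n + A n * Q n))).
      apply (LT_add_dom _ _ a Q (fun n => A n + A n * Q n) HQ). apply AE_add. eapply LT_AE; eauto.
      eapply AE_mono. exact AQ. lra. lra. exists N0; intros; rewrite <- Eid; auto; ring.
Qed.

Definition Inv (b : nat -> R) (c a B : R) :=
  ev (fun n => 0 < b n) /\ 0 < c /\ 0 < a /\ exists l, LT c a l /\ smallo B (fun n => R2 b n - 1 - l n).

Lemma R2S : forall b n, R2 b n = b n * b (S (S n)) / b (S n) ^ 2.
Proof. intros. unfold R2. replace (n + 2)%nat with (S (S n)) by lia. replace (n + 1)%nat with (S n) by lia. reflexivity. Qed.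

Lemma LopS : forall b n, Lop b n = b n * b (S (S n)) - b (S n) ^ 2.
Proof. intros. unfold Lop. replace (n + 2)%nat with (S (S n)) by lia. replace (n + 1)%nat with (S n) by lia. reflexivity. Qed.

Lemma Lop_x : forall b n, 0 < b (S n) -> Lop b n = b (S n) ^ 2 * (R2 b n - 1).
Proof. intros. rewrite LopS, R2S. field. lra. Qed.

Lemma R2_Lop : forall b n, 0 < b (S n) -> 0 < b (S (S n)) -> 0 < b (S (S (S n))) -> 0 < R2 b (S n) - 1 ->
  R2 (Lop b) n = (1 + (R2 b (S n) - 1)) * (1 + (R2 b (S n) - 1)) *
     ((R2 b n - 1) * (R2 b (S (S n)) - 1) * / ((R2 b (S n) - 1) * (R2 b (S n) - 1))).
Proof.
  intros b n H1 H2 H3 H4.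
  rewrite (R2S (Lop b)), !LopS. rewrite !R2S in *.
  assert (b (S n) * b (S (S (S n))) - b (S (S n)) ^ 2 <> 0).
  { intro E. assert (b (S n) * b (S (S (S n))) / b (S (S n)) ^ 2 - 1 = 0).
    { replace (b (S n) * b (S (S (S n)))) with (b (S (S n)) ^ 2) by lra. field. lra. } lra. }
  field. repeat split; try lra.
Qed.

Lemma step : forall b c a B, Inv b c a B -> a <= B ->
  ev (fun n => 0 < Lop b n) /\ exists c', Inv (Lop b) c' (falpha a) (B - a).
Proof.
  intros b c a B [[Nb Hb] [Hc [Ha [l [Hl Hs]]]]] HaB.
  set (x := fun n => R2 b n - 1).
  destruct (LT_pos _ _ _ Hl Hc) as [N1 HN1].
  assert (ap0 : approx (B - a) x l).
  { apply approx_add with (c / 2). exact Hs. lra.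
    exists N1. intros n Hn. specialize (HN1 n Hn). pose proof (Rle_abs (l n)). lra. }
  pose proof ap0 as [w [Hw [N2 HN2]]].
  assert (HE0 : 0 <= B - a) by lra. destruct (sm_small (B - a) w HE0 Hw (1/2)) as [N3 HN3]. lra.
  set (M := max N1 (max N2 N3)).
  assert (xpos : forall n, (M <= n)%nat -> 0 < x n).
  { intros n Hn. rewrite HN2 by lia. specialize (HN1 n ltac:(lia)). specialize (HN3 n ltac:(lia)).
    apply Rabs_le_between in HN3. pose proof (pw_pos a n).
    assert (0 < l n) by nra. nra. }
  assert (Lpos : ev (fun n => 0 < Lop b n)).
  { exists (max M Nb). intros n Hn. rewrite Lop_x by (apply Hb; lia).
    specialize (xpos n ltac:(lia)). specialize (Hb (S n) ltac:(lia)). unfold x in xpos.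
    apply Rmult_lt_0_compat; auto. apply pow_lt; auto. }
  split; auto.
  destruct (LT_next _ _ _ Hl Hc Ha) as [c' [Hc' Hl']].
  exists c'. split; auto. split; auto. split. unfold falpha; destruct Rlt_dec; lra.
  eexists. split. exact Hl'.
  set (P := fun n => (1 + l (S n)) * (1 + l (S n)) * (l n * l (S (S n)) * / (l (S n) * l (S n)))).
  assert (apA : approx (B - a) (fun n => 1 + x (S n)) (fun n => 1 + l (S n))).
  { eapply approx_mono. apply approx_add with (s := 0) (k := 1/2).
    eapply sm_ext. apply (sm_shift B _ ltac:(lra) Hs). exists 0%nat; intros; unfold x; ring. lra.
    destruct (LT_small _ _ _ (LT_shift _ _ _ Hl) Ha (1/2)) as [N4 HN4]. lra.
    exists N4. intros n Hn. specialize (HN4 n Hn). apply Rabs_le_between in HN4. rewrite pw_0.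
    rewrite Rabs_pos_eq; lra. lra. }
  assert (HE : 0 <= B - a) by lra.
  pose proof (approx_shift _ _ _ HE ap0) as ap1.
  pose proof (approx_shift _ _ _ HE ap1) as ap2.
  assert (apP : approx (B - a) (R2 (Lop b)) P).
  { eapply approx_ext.
    apply (approx_mul _ _ _ _ _ HE (approx_mul _ _ _ _ _ HE apA apA)
             (approx_mul _ _ _ _ _ HE (approx_mul _ _ _ _ _ HE ap0 ap2)
                (approx_inv _ _ _ HE (approx_mul _ _ _ _ _ HE ap1 ap1)))).
    exists (max M Nb). intros n Hn. simpl. symmetry. unfold x. apply R2_Lop; try (apply Hb; lia).
    apply (xpos (S n)). lia.
    exists 0%nat. intros. reflexivity. }
  eapply sm_ext. apply (approx_final _ _ _ apP).
  destruct (LT_small _ _ _ Hl' ltac:(unfold falpha; destruct Rlt_dec; lra) 1) as [N5 HN5]. lra.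
  exists 2, N5. intros n Hn. specialize (HN5 n Hn). apply Rabs_le_between in HN5.
  unfold P. apply Rabs_le. lra.
  exists 0%nat. intros. unfold P. ring.
Qed.

Fixpoint AB (a b : R) (k : nat) : R * R :=
  match k with O => (a, b) | S k' => (falpha (fst (AB a b k')), snd (AB a b k') - fst (AB a b k')) end.

Lemma iter : forall a0 c0 al be, Inv a0 c0 al be -> forall K,
  (forall k, (k < K)%nat -> fst (AB al be k) <= snd (AB al be k)) ->
  (exists c, Inv (Liter K a0) c (fst (AB al be K)) (snd (AB al be K))) /\
  exists N, forall k n, (1 <= k <= K)%nat -> (N <= n)%nat -> 0 <= Liter k a0 n.
Proof.
  intros a0 c0 al be H0. induction K; intros HK.
  - split. exists c0; exact H0. exists 0%nat. intros; lia.
  - destruct IHK as [[c Hc] [N HN]]. intros; apply HK; lia.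
    destruct (step _ _ _ _ Hc (HK K ltac:(lia))) as [[N' HN'] [c' Hc']].
    split. exists c'. exact Hc'.
    exists (max N N'). intros k n Hk Hn. destruct (Nat.eq_dec k (S K)).
    + subst k. left. apply HN'. lia.
    + apply HN; lia.
Qed.

Lemma AE_sum : forall s (F : nat -> nat -> R) m j, (forall i, (j <= i <= m)%nat -> AE s (F i)) ->
  AE s (fun n => sum_n_m (fun i => F i n) j m).
Proof.
  intros s F. induction m; intros j H.
  - destruct j.
    + eapply AE_ext. apply (H 0%nat). lia. exists 0%nat. intros. rewrite sum_n_n. reflexivity.
    + eapply AE_ext. apply AE_zero. exists 0%nat. intros. rewrite sum_n_m_zero by lia. reflexivity.
  - destruct (le_lt_dec j (S m)).
    + destruct (Nat.eq_dec j (S m)).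
      * subst. eapply AE_ext. apply (H (S m)). lia. exists 0%nat. intros. rewrite sum_n_n. reflexivity.
      * eapply AE_ext. apply (AE_add s (fun n => sum_n_m (fun i => F i n) j m) (F (S m))).
        apply IHm. intros; apply H; lia. apply H; lia.
        exists 0%nat. intros. rewrite sum_n_Sm by lia. reflexivity.
    + eapply AE_ext. apply AE_zero. exists 0%nat. intros. rewrite sum_n_m_zero by lia. reflexivity.
Qed.

Lemma alph_mono : forall (alph : nat -> R) m, (forall i, (1 <= i)%nat -> (i < m)%nat -> alph i < alph (S i)) ->
  forall i, (2 <= i <= m)%nat -> alph 2%nat <= alph i.
Proof.
  intros alph m H. induction i; intros Hi. lia.
  destruct (Nat.eq_dec i 1). subst; lra.
  specialize (IHi ltac:(lia)). specialize (H i ltac:(lia) ltac:(lia)). lra.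
Qed.

Lemma toNat_le : forall n z, (n <= Z.to_nat z)%nat -> (1 <= n)%nat -> INR n <= IZR z.
Proof.
  intros n z H1 H2. destruct (Z_lt_le_dec z 0).
  - destruct z; try lia; simpl in H1; lia.
  - apply le_INR in H1. rewrite (INR_IZR_INZ (Z.to_nat z)), Z2Nat.id in H1 by lia. exact H1.
Qed.

Lemma AB_lt2 : forall al be, al < 2 -> forall k, AB al be k = (al, be - INR k * al).
Proof.
  intros al be H. induction k. simpl. f_equal. ring.
  cbn [AB]. rewrite IHk. cbn [fst snd]. unfold falpha. destruct Rlt_dec; try lra. f_equal. rewrite S_INR. ring.
Qed.

Lemma AB_ge2 : forall al be, 2 <= al -> forall k, AB al be (S k) = (2, be - al - 2 * INR k).
Proof.
  intros al be H. induction k. simpl. unfold falpha. destruct Rlt_dec; try lra. f_equal. ring.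
  change (AB al be (S (S k))) with (falpha (fst (AB al be (S k))), snd (AB al be (S k)) - fst (AB al be (S k))).
  rewrite IHk. cbn [fst snd]. unfold falpha. destruct Rlt_dec; try lra. f_equal. rewrite S_INR. ring.
Qed.

Definition lsum (coef alph : nat -> R) (m n : nat) : R :=
  sum_n_m (fun i => coef i * Rpower (INR n) (- alph i)) 1 m.

Theorem mainTheorem2 (a : nat -> R) (c alpha beta : R)
  (Ha : forall n : nat, 0 < a n)
  (Hc : 0 < c) (Halpha : 0 < alpha) (Hab : alpha <= beta)
  (Hpuiseux : exists (m : nat) (alph coef : nat -> R),
      (1 <= m)%nat /\ alph 1%nat = alpha /\ coef 1%nat = c /\
      (forall i : nat, (1 <= i)%nat -> (i < m)%nat -> alph i < alph (S i)) /\
      is_lim_seq (fun n : nat =>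
          Rpower (INR n) beta *
          (R2 a n - 1 - sum_n_m (fun i => coef i * Rpower (INR n) (- alph i)) 1 m))
        0) :
  asymp_r_log_convex (r_of alpha beta) a.
Proof.
  destruct Hpuiseux as [m [alph [coef [Hm [H1 [H2 [Hinc Hlim]]]]]]].
  pose (l := lsum coef alph m).
  assert (Hl : LT c alpha l).
  { assert (El : forall n, l n = c * pw alpha n + sum_n_m (fun i => coef i * pw (alph i) n) 2 m).
    { intros n. unfold l, lsum. rewrite sum_Sn_m by lia. rewrite H2, <- H1. reflexivity. }
    destruct (le_lt_dec 2 m).
    - exists (alph 2%nat - alpha). split. rewrite <- H1. pose proof (Hinc 1%nat ltac:(lia) ltac:(lia)). lra.
      replace (alpha + (alph 2%nat - alpha)) with (alph 2%nat) by ring.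
      eapply AE_ext. apply (AE_sum (alph 2%nat) (fun i n => coef i * pw (alph i) n) m 2).
      intros i Hi. apply (AE_mono (alph i)). apply AE_scal, AE_pw. apply (alph_mono alph m Hinc); lia.
      exists 0%nat. intros n _. rewrite El. lra.
    - exists 1. split. lra. eapply AE_ext. apply AE_zero. exists 0%nat. intros n _. rewrite El.
      rewrite sum_n_m_zero by lia. change (zero : R) with 0. ring. }
  assert (Hs : smallo beta (fun n => R2 a n - 1 - l n)).
  { intros eps He. apply is_lim_seq_Reals in Hlim. destruct (Hlim eps He) as [N HN].
    exists N. intros n Hn. specialize (HN n Hn). unfold R_dist in HN. rewrite Rminus_0_r in HN.
    rewrite Rabs_mult in HN. 
    assert (E1 : Rpower (INR n) beta * pw beta n = 1).
    { unfold pw. rewrite <- Rpower_plus. replace (beta + - beta) with 0 by ring. unfold Rpower. rewrite Rmult_0_l. apply exp_0. }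
    assert (0 < Rpower (INR n) beta) by (unfold Rpower; apply exp_pos).
    rewrite Rabs_pos_eq in HN by lra. pose proof (pw_pos beta n).
    cbv beta. set (X := Rabs (R2 a n - 1 - l n)) in *.
    assert (EX : X = Rpower (INR n) beta * X * pw beta n).
    { transitivity (X * (Rpower (INR n) beta * pw beta n)). rewrite E1. ring. ring. }
    assert (HN2 : Rpower (INR n) beta * X < eps) by exact HN.
    rewrite EX. apply Rmult_le_compat_r; lra. }
  assert (HI : Inv a c alpha beta).
  { split. exists 0%nat; intros; auto. split; auto. split; auto. exists l. split; auto. }
  destruct (iter _ _ _ _ HI (r_of alpha beta)) as [_ [N HN]].
  2: { exists N. intros k n Hk Hn. apply HN; auto. }
  intros k Hk. unfold r_of, Rfloor in Hk. destruct (Rlt_dec alpha 2) as [Hlt|Hge].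
  - rewrite AB_lt2 by auto. simpl.
    pose proof (toNat_le (S k) _ Hk ltac:(lia)).
    destruct (base_Int_part (beta / alpha)) as [B1 _].
    assert (INR (S k) * alpha <= beta).
    { apply Rle_trans with (beta / alpha * alpha). apply Rmult_le_compat_r; lra. right; field; lra. }
    rewrite S_INR in *. lra.
  - destruct k. simpl. lra.
    rewrite AB_ge2 by lra. simpl.
    pose proof (toNat_le (S k) (Int_part ((beta - alpha) / 2)) ltac:(lia) ltac:(lia)).
    destruct (base_Int_part ((beta - alpha) / 2)) as [B1 _].
    rewrite S_INR in *. lra.
Qed.
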